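(* Let $a\le b$ be integers and $i\in[a,b]$. Then in $\mathcal{K}$ $$[b-a+2]_q\,u_i\,u_{[a,b]}=q^{\,i-a+1}[b-i+1]_q\,u_{[a-1,b]}+[i-a+1]_q\,u_{[a,b+1]}.$$ Moreover, this identity is a consequence of the defining relations $(q+1)u_j^2=qu_ju_{j-1}+u_ju_{j+1}$ for $j=a,a+1,\dots,b$ only.
   Context: Let $\mathbf{k}$ be a field of characteristic zero and $q\in\mathbf{k}$ an element that is not a nontrivial root of unity (so $[m]_q\ne 0$ for $m\ge 1$). Notation: $[m]_q=1+q+\dots+q^{m-1}$, $[m]_q!=\prod_{i=1}^m[i]_q$, $\binom{m}{k}_q=[m]_q!/([k]_q![m-k]_q!)$, and $[a,b]=\{a,a+1,\dots,b\}$. The Klyachko algebra $\mathcal{K}$ is the commutative $\mathbf{k}$-algebra generated by $u_i$, $i\in\mathbb{Z}$, subject to the relations $(q+1)u_i^2=qu_iu_{i-1}+u_iu_{i+1}$ for all $i\in\mathbb{Z}$. For a finite set $I\subset\mathbb{Z}$, $u_I=\prod_{i\in I}u_i$. *)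

(* Defs.v *)
From mathcomp Require Import all_boot all_order all_algebra.
Set Implicit Arguments. Unset Strict Implicit. Unset Printing Implicit Defensive.
Import GRing.Theory.
Local Open Scope ring_scope.

Definition qint (R : nzRingType) (q : R) (m : nat) : R := \sum_(k < m) q ^+ k.

Definition uI (R : nzRingType) (u : int -> R) (a b : int) : R :=
  \prod_(k < `|(b - a + 1)%R|%N) u (a + k%:Z).

Definition klyachko_rel (k : fieldType) (A : comAlgType k) (q : k) (u : int -> A) (j : int) : Prop :=
  (q + 1) *: (u j ^+ 2) = q *: (u j * u (j - 1)) + u j * u (j + 1).

(* Main.v *)
Require Import Defs.
From mathcomp Require Import all_boot all_order all_algebra.
From mathcomp Require Import zify ring.
Import GRing.Theory.
Local Open Scope ring_scope.

Lemma qintS (k : fieldType) (q : k) t : qint q t.+1 = qint q t + q ^+ t.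
Proof. by rewrite /qint big_ord_recr. Qed.

Lemma qintD (k : fieldType) (q : k) p r : qint q (p + r) = qint q p + q ^+ p * qint q r.
Proof.
elim: r => [|r IH]; first by rewrite addn0 /qint big_ord0 mulr0 addr0.
by rewrite addnS !qintS IH mulrDr -exprD addrA.
Qed.

Lemma rec_diff (k : fieldType) (V : lmodType k) (q : k) (x : nat -> V) n :
  (forall t, (t <= n)%N -> (q+1) *: x t.+1 = q *: x t + x t.+2) ->
  forall t, (t <= n.+1)%N -> x t.+1 - x t = q ^+ t *: (x 1%N - x 0%N).
Proof.
move=> H; elim=> [|t IH] ht; first by rewrite scale1r.
have e : x t.+2 = (q+1) *: x t.+1 - q *: x t.
  by rewrite H; [rewrite addrC addKr | lia].
rewrite e exprS -scalerA -IH; last lia.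
by rewrite scalerDl scale1r scalerBr addrAC addrK.
Qed.

Lemma rec_closed (k : fieldType) (V : lmodType k) (q : k) (x : nat -> V) n :
  (forall t, (t <= n)%N -> (q+1) *: x t.+1 = q *: x t + x t.+2) ->
  forall t, (t <= n.+2)%N -> x t = x 0%N + qint q t *: (x 1%N - x 0%N).
Proof.
move=> H; elim=> [|t IH] ht; first by rewrite /qint big_ord0 scale0r addr0.
have d := @rec_diff k V q x n H t ltac:(lia).
rewrite qintS scalerDl addrA -IH; last lia.
by rewrite -d addrC subrK.
Qed.

Lemma uI_nat (R : nzRingType) (u : int -> R) (a : int) (n : nat) :
  uI u a (a + n%:Z) = \prod_(k < n.+1) u (a + k%:Z).
Proof. by rewrite /uI; have -> : `|(a + n%:Z - a + 1)%R|%N = n.+1 by lia. Qed.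

Theorem mainTheorem1 (k : fieldType) (q : k)
  (hchar : [pchar k] =i pred0)
  (hq : forall n : nat, (0 < n)%N -> q ^+ n = 1 -> q = 1)
  (A : comAlgType k) (u : int -> A) (a b i : int)
  (hab : a <= b) (hai : a <= i) (hib : i <= b)
  (hrel : forall j : int, a <= j <= b -> klyachko_rel q u j) :
  qint q `|(b - a + 2)%R|%N *: (u i * uI u a b)
  = (q ^+ `|(i - a + 1)%R|%N * qint q `|(b - i + 1)%R|%N) *: uI u (a - 1) b
    + qint q `|(i - a + 1)%R|%N *: uI u a (b + 1).
Proof.
have [n hn] : exists n : nat, b = a + n%:Z by exists `|b - a|%N; lia.
have [m hm] : exists m : nat, i = a + m%:Z by exists `|i - a|%N; lia.
have hmn : (m <= n)%N by lia.
subst b i.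
have -> : `|(a + n%:Z - a + 2)%R|%N = n.+2 by lia.
have -> : `|(a + m%:Z - a + 1)%R|%N = m.+1 by lia.
have -> : `|(a + n%:Z - (a + m%:Z) + 1)%R|%N = (n - m).+1 by lia.
set P := uI u a (a + n%:Z).
pose x (t : nat) := P * u (a + t%:Z - 1).
have e0 : uI u (a - 1) (a + n%:Z) = x 0%N.
  rewrite /x /uI; have -> : `|(a + n%:Z - (a - 1) + 1)%R|%N = n.+2 by lia.
  rewrite big_ord_recl /P uI_nat mulrC; congr (_ * _).
    by apply: eq_bigr => j _; congr (u _); rewrite lift0 /=; lia.
  by congr (u _); rewrite /=; lia.
have e1 : uI u a (a + n%:Z + 1) = x n.+2.
  have -> : a + n%:Z + 1 = a + (n.+1)%:Z by lia.
  rewrite /x uI_nat big_ord_recr /P uI_nat /=.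
  by congr (_ * u _); lia.
have e2 : u (a + m%:Z) * P = x m.+1.
  by rewrite /x mulrC; congr (_ * u _); lia.
have hx : forall t, (t <= n)%N -> (q+1) *: x t.+1 = q *: x t + x t.+2.
  move=> t ht.
  have := hrel (a + t%:Z) ltac:(apply/andP; split; lia).
  rewrite /klyachko_rel => H.
  have [P' hP] : exists P', P = u (a + t%:Z) * P'.
    have ht' : (t < n.+1)%N by lia.
    exists (\prod_(j < n.+1 | j != Ordinal ht') u (a + j%:Z)).
    by rewrite /P uI_nat (bigD1 (Ordinal ht')).
  rewrite /x hP.
  have -> : a + (t.+1)%:Z - 1 = a + t%:Z by lia.
  have -> : a + (t.+2)%:Z - 1 = a + t%:Z + 1 by lia.
  have r : forall w, u (a + t%:Z) * P' * w = P' * (u (a + t%:Z) * w).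
    by move=> w; rewrite [_ * P']mulrC mulrA.
  rewrite expr2 in H.
  rewrite !r !scalerAr -mulrDr.
  by rewrite !scalerAr in H; rewrite H.
rewrite e2 e0 e1.
rewrite (@rec_closed k A q x n hx m.+1 ltac:(lia)) (@rec_closed k A q x n hx n.+2 ltac:(lia)).
have -> : n.+2 = (m.+1 + (n - m).+1)%N by lia.
rewrite qintD.
set d := (x 1%N - x 0%N). clearbody d. set x0 := x 0%N. clearbody x0.
move: (qint q m.+1) (q ^+ m.+1 * qint q (n - m).+1) => X Y.
rewrite !scalerDr !scalerDl !scalerA [Y * X]mulrC.
rewrite [Y *: x0 + (_ + _)]addrA.
by rewrite [Y *: x0 + _]addrC scalerDr !scalerA.
Qed.
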